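(* Let $\pi_1,\pi_2\in\mathcal{P}(\mathcal{X})$ and $M\ge1$. Then for every $\mu_1\in\mathcal{N}(\pi_1,M)$ there exists $\mu_2\in\mathcal{N}(\pi_2,M)$ such that $\|\mu_1-\mu_2\|_{TV}\le M\|\pi_1-\pi_2\|_{TV}$.
   Context: $\mathcal{P}(\mathcal{X})$ is the set of probability distributions on a measurable space $\mathcal{X}$; $\|\mu-\nu\|_{TV}=\sup_A|\mu(A)-\nu(A)|$; $\mathcal{N}(\pi,M)=\{\mu\in\mathcal{P}(\mathcal{X}):\mu(A)\le M\pi(A)\text{ for all measurable }A\}$. *)

(* Defs.v *)
From HB Require Import structures.
From mathcomp Require Import all_boot all_order all_algebra.
From mathcomp Require Import all_classical all_reals all_analysis.
Set Implicit Arguments. Unset Strict Implicit. Unset Printing Implicit Defensive.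
Import Order.TTheory GRing.Theory Num.Theory.
Local Open Scope classical_set_scope.
Local Open Scope ring_scope.
Local Open Scope ereal_scope.

Definition tv_dist d (T : measurableType d) (R : realType)
  (mu nu : probability T R) : \bar R :=
  ereal_sup [set `| mu A - nu A | | A in [set A : set T | measurable A]].

Definition in_N d (T : measurableType d) (R : realType)
  (pi : probability T R) (M : R) (mu : probability T R) : Prop :=
  forall A : set T, measurable A -> mu A <= M%:E * pi A.

(* Main.v *)
Require Import Defs.
From HB Require Import structures.
From mathcomp Require Import all_boot all_order all_algebra.
From mathcomp Require Import all_classical all_reals all_analysis.
From mathcomp Require Import lra.
Import Order.TTheory GRing.Theory Num.Theory.
Local Open Scope classical_set_scope.
Local Open Scope ring_scope.
Local Open Scope ereal_scope.

Section helpers.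
Context {d : measure_display} {T : measurableType d} {R : realType}.

Definition rm (mu : probability T R) (A : set T) : R := fine (mu A).

Lemma rmE (mu : probability T R) A : measurable A -> mu A = (rm mu A)%:E.
Proof. by move=> mA; rewrite /rm fineK // fin_num_measure. Qed.

Lemma rm_ge0 (mu : probability T R) A : measurable A -> (0 <= rm mu A)%R.
Proof. by move=> mA; rewrite /rm fine_ge0. Qed.

Lemma rmT (mu : probability T R) : rm mu setT = 1%R.
Proof. by rewrite /rm probability_setT. Qed.

Lemma rmDI (mu : probability T R) A B : measurable A -> measurable B ->
  rm mu A = (rm mu (A `\` B) + rm mu (A `&` B))%R.
Proof.
move=> mA mB; apply: EFin_inj; rewrite EFinD -!rmE //.
all: first [exact: measureDI | exact: measurableD | exact: measurableI].
Qed.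

Lemma mnormalize1 (mu : {measure set T -> \bar R}) (P : probability T R) :
  mu setT = 1 -> forall A, mnormalize mu P A = mu A.
Proof.
move=> h A; rewrite /mnormalize h.
rewrite onee_eq0 /=.
by rewrite invr1 mule1.
Qed.

End helpers.

Theorem lemma2p3 (d : measure_display) (T : measurableType d) (R : realType)
  (pi1 pi2 : probability T R) (M : R) (hM : (1 <= M)%R)
  (mu1 : probability T R) (hmu1 : in_N pi1 M mu1) :
  exists mu2 : probability T R,
    in_N pi2 M mu2 /\ tv_dist mu1 mu2 <= M%:E * tv_dist pi1 pi2.
Proof.
pose nu := cadd (charge_of_finite_measure mu1)
  (cscale (- M)%R (charge_of_finite_measure pi2)).
have nuE A : measurable A -> nu A = (rm mu1 A - M * rm pi2 A)%:E.
  move=> mA; change (mu1 A + (- M)%:E * pi2 A = (rm mu1 A - M * rm pi2 A)%:E).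
  by rewrite !rmE // -EFinM -EFinD mulNr.
have [P [N [[mP posP] [mN negN] PNT PN0]]] := Hahn_decomposition nu.
have NE : N = ~` P.
  apply/seteqP; split => x /=.
    move=> Nx Px; have : (P `&` N) x by split.
    by rewrite PN0.
  move=> nPx; have : (P `|` N) x by rewrite PNT.
  by case.
subst N.
have posP' A : measurable A -> A `<=` P -> (0 <= rm mu1 A - M * rm pi2 A)%R.
  by move=> mA AP; rewrite -lee_fin -nuE //; exact: posP.
have negN' A : measurable A -> A `<=` ~` P -> (rm mu1 A - M * rm pi2 A <= 0)%R.
  by move=> mA AP; rewrite -lee_fin -nuE //; exact: negN.
have mNP : measurable (~` P) by exact: measurableC.
have rmC (mu : probability T R) : rm mu (~` P) = (1 - rm mu P)%R.
  by have := rmDI mu _ _ measurableT mP; rewrite setTD setTI rmT; lra.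
set m1P := rm mu1 P; set p2P := rm pi2 P; set p1P := rm pi1 P.
pose del := (m1P - M * p2P)%R.
have del0 : (0 <= del)%R.
  exact: posP' P mP (@subset_refl _ P).
pose Dd := (M - 1 + del)%R.
pose c := (del / Dd)%R.
have [c0 c1 cD] : [/\ (0 <= c)%R, (c <= 1)%R & (c * Dd = del)%R].
  have [D0|D0] := eqVneq Dd 0%R.
    have del00 : del = 0%R by move: D0; rewrite /Dd; lra.
    by rewrite /c D0 del00 !mul0r; split => //; lra.
  have Dpos : (0 < Dd)%R by rewrite lt0r D0 /Dd /=; lra.
  split.
  - by rewrite /c divr_ge0 // ltW.
  - by rewrite /c ler_pdivrMr // mul1r /Dd; lra.
  - by rewrite /c mulrVK // unitfE.
have ha : (0 <= 1 - c)%R by lra.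
have hb : (0 <= c * M)%R by apply: mulr_ge0 => //; lra.
have hMM : (0 <= M)%R by lra.
pose a : {nonneg R} := NngNum ha.
pose b : {nonneg R} := NngNum hb.
pose Mn : {nonneg R} := NngNum hMM.
pose m := measure_add (measure_add (mscale a (mrestr mu1 mNP))
  (mscale b (mrestr pi2 mNP))) (mscale Mn (mrestr pi2 mP)).
have mE A : measurable A -> m A = ((1 - c) * rm mu1 (A `&` ~` P)
   + c * M * rm pi2 (A `&` ~` P) + M * rm pi2 (A `&` P))%:E.
  move=> mA; rewrite /m /measure_add /msum /= !big_ord_recl !big_ord0 /= !adde0.
  rewrite /msum !big_ord_recl !big_ord0 /= !adde0.
  rewrite /mrestr !EFinD !EFinM -!rmE -?mulrA ?EFinM //; apply: measurableI => //.
have mT : m setT = 1.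
  rewrite mE // !setTI rmC (rmC pi2); congr (_%:E).
  have := cD; rewrite /Dd /del /m1P /p2P => cD'.
  rewrite /del /m1P /p2P in cD'.
  lra.
pose mu2 : probability T R := mnormalize m pi2.
have mu2E A : mu2 A = m A.
  exact: mnormalize1.
have AN A : measurable A -> rm mu1 A = (rm mu1 (A `&` ~` P) + rm mu1 (A `&` P))%R.
  by move=> mA; rewrite (rmDI mu1 _ _ mA mP) setDE.
have AN2 A : measurable A -> rm pi2 A = (rm pi2 (A `&` ~` P) + rm pi2 (A `&` P))%R.
  by move=> mA; rewrite (rmDI pi2 _ _ mA mP) setDE.
exists mu2; split.
  move=> A mA; rewrite mu2E mE // rmE // lee_fin (AN2 A mA).
  have h1 := negN' _ (measurableI _ _ mA mNP) (@subIsetr _ _ _).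
  have h2 : (0 <= (1 - c) * (M * rm pi2 (A `&` ~` P) - rm mu1 (A `&` ~` P)))%R.
    by apply: mulr_ge0 => //; lra.
  lra.
apply: (@le_trans _ _ del%:E).
  apply: ge_ereal_sup => _ [A mA <-].
  rewrite mu2E mE // rmE // -EFinB abse_EFin lee_fin (AN A mA).
  set x := rm mu1 (A `&` ~` P); set w := rm mu1 (A `&` P).
  set y := rm pi2 (A `&` ~` P); set z := rm pi2 (A `&` P).
  have mAP : measurable (A `&` P) by exact: measurableI.
  have mAN : measurable (A `&` ~` P) by exact: measurableI.
  have h1 : (0 <= w - M * z)%R := posP' _ mAP (@subIsetr _ _ _).
  have h2 : (x - M * y <= 0)%R := negN' _ mAN (@subIsetr _ _ _).
  have h3 := posP' _ (measurableD mP mA) (@subDsetl _ _ _).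
  have h3' := rmDI mu1 _ _ mP mA; have h3'' := rmDI pi2 _ _ mP mA.
  rewrite (setIC P A) -/w -/z in h3' h3''.
  have h4 := negN' _ (measurableD mNP mA) (@subDsetl _ _ _).
  have h4' := rmDI mu1 _ _ mNP mA; have h4'' := rmDI pi2 _ _ mNP mA.
  rewrite (setIC (~` P) A) -/x -/y !rmC in h4' h4''.
  have k3 := congr1 (fun t => M * t)%R h3''; rewrite /= mulrDr in k3.
  have k4 := congr1 (fun t => M * t)%R h4''; rewrite /= mulrDr in k4.
  have p1 : (0 <= c * (M * y - x))%R by apply: mulr_ge0 => //; lra.
  have p2 : (0 <= c * (x - M * y + Dd))%R.
    apply: mulr_ge0 => //; rewrite /Dd /del /m1P /p2P; lra.
  have cD' := cD; rewrite /Dd /del /m1P /p2P in cD'.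
  rewrite /Dd /del /m1P /p2P in p2.
  rewrite ler_norml; apply/andP; split; rewrite /del /m1P /p2P; lra.
have h5 := hmu1 P mP; rewrite !rmE // -EFinM lee_fin in h5.
apply: (@le_trans _ _ (M * (p1P - p2P))%:E).
  by rewrite lee_fin /del /m1P /p1P /p2P; lra.
rewrite EFinM; apply: lee_wpmul2l; first by rewrite lee_fin.
apply: (@le_trans _ _ `|pi1 P - pi2 P|).
  by rewrite !rmE // -EFinB abse_EFin lee_fin ler_norm.
by apply: ereal_sup_ubound; exists P.
Qed.
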